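(* Fix an integer $k$ and a positive integer $N$. Let $\alpha_i,\beta_i,p_i,q_i,\eta_i,\xi_i$ ($i=1,\dots,N$) be real numbers, and let $F$ be the $N\times N$ matrix with entries $$F_{ij}=\alpha_ip_i^{k+j-1}e^{\eta_i}+\beta_iq_i^{k+j-1}e^{\xi_i},\qquad i,j=1,\dots,N.$$ Suppose $$q_N<q_{N-1}<\cdots<q_1<0<p_1<p_2<\cdots<p_N,\qquad \alpha_i>0,\qquad \operatorname{sgn}\beta_i=(-1)^{k+i-1}\quad(i=1,\dots,N).$$ Then $\det F>0$.
   Context: $\operatorname{sgn}$ denotes the sign function ($\operatorname{sgn}x=1$ for $x>0$, $-1$ for $x<0$). *)

(* Defs.v *)
From HB Require Import structures.
From mathcomp Require Import all_boot all_order all_algebra.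
From mathcomp Require Import all_classical all_reals all_analysis.
Set Implicit Arguments. Unset Strict Implicit. Unset Printing Implicit Defensive.
Import Order.TTheory GRing.Theory Num.Theory.
Local Open Scope ring_scope.

(* The matrix F of the paper, with 0-based indices: the paper's (i,j) entry
   corresponds to (i0,j0) = (i-1,j-1), so the exponent k+j-1 becomes k+j0. *)
Definition Fmat (R : realType) (N : nat) (k : int)
  (alpha beta p q eta xi : 'I_N -> R) : 'M[R]_N :=
  \matrix_(i < N, j < N)
    (alpha i * p i ^ (k + (j : nat)%:Z) * expR (eta i)
     + beta i * q i ^ (k + (j : nat)%:Z) * expR (xi i)).

(* Main.v *)
Require Import Defs.
From HB Require Import structures.
From mathcomp Require Import all_boot all_order all_algebra.
From mathcomp Require Import all_classical all_reals all_analysis.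
From mathcomp Require Import fingroup perm ring lra.
Import Order.TTheory GRing.Theory Num.Theory.
Local Open Scope ring_scope.

Local Notation Sn n := {perm 'I_n}.
Local Notation FB n := {ffun 'I_n -> bool}.

Lemma det_expand (R : comPzRingType) n (c : bool -> 'I_n -> 'I_n -> R) :
  \det (\matrix_(i, j) \sum_(b : bool) c b i j) =
  \sum_(f : FB n) \det (\matrix_(i, j) c (f i) i j).
Proof.
rewrite /determinant.
transitivity (\sum_(s : Sn n) \sum_(f : FB n) (-1) ^+ s * \prod_i c (f i) i (s i)).
  apply: eq_bigr => s _; rewrite -big_distrr /=; congr (_ * _).
  rewrite -(bigA_distr_bigA (fun i b => c b i (s i))); apply: eq_bigr => i _; by rewrite mxE.
rewrite exchange_big /=; apply: eq_bigr => f _; apply: eq_bigr => s _.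
by congr (_ * _); apply: eq_bigr => i _; rewrite mxE.
Qed.


Lemma term_pos (R : realType) (N : nat) (k : int)
  (alpha beta p q eta xi : 'I_N -> R) (f : 'I_N -> bool) :
  (forall i : 'I_N, 0 < p i) ->
  (forall i : 'I_N, q i < 0) ->
  (forall i j : 'I_N, (i < j)%N -> p i < p j) ->
  (forall i j : 'I_N, (i < j)%N -> q j < q i) ->
  (forall i : 'I_N, 0 < alpha i) ->
  (forall i : 'I_N, Num.sg (beta i) = (-1) ^ (k + (i : nat)%:Z)) ->
  0 < \det (\matrix_(i < N, j < N) (if f i then
       alpha i * p i ^ (k + (j : nat)%:Z) * expR (eta i)
     else beta i * q i ^ (k + (j : nat)%:Z) * expR (xi i))).
Proof.
move=> hp hq hpp hqq ha hb.
pose X i := if f i then p i else q i.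
pose C i := if f i then alpha i * expR (eta i) else beta i * expR (xi i).
have X0 i : X i != 0.
  rewrite /X; case: (f i); [exact: lt0r_neq0 | exact: ltr0_neq0].
have -> : (\matrix_(i < N, j < N) (if f i then
       alpha i * p i ^ (k + (j : nat)%:Z) * expR (eta i)
     else beta i * q i ^ (k + (j : nat)%:Z) * expR (xi i)))
   = diag_mx (\row_i (C i * X i ^ k)) *m (Vandermonde N (\row_i X i))^T.
  apply/matrixP => i j; rewrite mul_diag_mx !mxE; idtac.
  rewrite /C /X; case: (f i); rewrite ?expfzDr -?exprnP.
  all: try exact: (lt0r_neq0 (hp i)); try exact: (ltr0_neq0 (hq i)).
  1,2: by rewrite -mulrA [in LHS](mulrC _ (expR _)) !mulrA.
rewrite det_mulmx det_tr det_diag det_Vandermonde.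
under eq_bigr do rewrite mxE.
rewrite [Y in _ * Y](eq_bigr (fun i : 'I_N => \prod_(j < N | (i < j)%N) (X j - X i))); last first.
  by move=> i _; apply: eq_bigr => j _; rewrite !mxE.
pose e j := (-1) ^+ (~~ f j) : R.
have hE : \prod_(i < N) \prod_(j < N | (i < j)%N) e j = \prod_(j < N) e j ^+ j.
  rewrite (exchange_big_dep xpredT) //=; apply: eq_bigr => j _.
  rewrite -(big_ord_widen N (fun _ => e j) (ltnW (ltn_ord j))).
  by rewrite prodr_const card_ord.
have hee : forall j : 'I_N, e j ^+ j * e j ^+ j = 1.
  move=> j; rewrite /e; case: (f j) => /=; first by rewrite expr1n mulr1.
  by rewrite expr1 -expr2 sqrr_sign.
have hV : \prod_(i < N) \prod_(j < N | (i < j)%N) (X j - X i) =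
   (\prod_(j < N) e j ^+ j) * \prod_(i < N) \prod_(j < N | (i < j)%N) (e j * (X j - X i)).
  have -> : \prod_(i < N) \prod_(j < N | (i < j)%N) (e j * (X j - X i)) =
    (\prod_(i < N) \prod_(j < N | (i < j)%N) e j) *
    \prod_(i < N) \prod_(j < N | (i < j)%N) (X j - X i).
    by rewrite -big_split; apply: eq_bigr => i _; rewrite big_split.
  rewrite hE mulrA -big_split /=.
  rewrite [X in _ = X * _](eq_bigr (fun _ => 1)); last by move=> j _; exact: hee.
  by rewrite big1_eq mul1r.
rewrite hV mulrA -big_split /=; apply: mulr_gt0.
  apply: prodr_gt0 => j _; rewrite /C /X /e; case hf: (f j) => /=.
    rewrite expr1n mulr1; apply: mulr_gt0; last exact: exprz_gt0.
    by apply: mulr_gt0; [exact: ha | exact: expR_gt0].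
  rewrite expr1 (numEsg (beta j)) hb expfzDr; last by rewrite oppr_eq0 oner_eq0.
  rewrite -[q j]opprK -[- - q j]mulN1r expfzMl.
  have hk : (-1) ^ k * (-1) ^ k = 1 :> R by rewrite -expfzMl mulrNN mulr1 exp1rz.
  have hj : (-1) ^+ j * (-1) ^+ j = 1 :> R by rewrite -expr2 sqrr_sign.
  have hb0 : 0 < `|beta j|.
    rewrite normr_gt0; apply/negP => /eqP h0; move: (hb j); rewrite h0 sgr0.
    move=> /(congr1 (fun x => x * x)); rewrite -expfzMl mulrNN mulr1 exp1rz mulr0.
    by move/eqP; rewrite eq_sym oner_eq0.
  have hx : 0 < expR (xi j) := expR_gt0 _.
  have hq' : 0 < (- q j) ^ k by apply: exprz_gt0; rewrite oppr_gt0.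
  move: hk hj hb0 hx hq'; rewrite -[(-1) ^ ((j : nat) : int)]exprnP.
  move: ((-1) ^ k) ((-1) ^+ j) `|beta j| (expR (xi j)) ((- q j) ^ k) => a b c d g.
  move=> hk hj hb0 hx hq'.
  have -> : a * b * c * d * (a * g) * b = (a * a) * (b * b) * (c * d * g) by ring.
  rewrite hk hj !mul1r; apply: mulr_gt0 => //; exact: mulr_gt0.
apply: prodr_gt0 => i _; apply: prodr_gt0 => j hij.
have := hp i; have := hp j; have := hq i; have := hq j.
have := hpp i j hij; have := hqq i j hij.
rewrite /e /X; case: (f i); case: (f j) => /=; rewrite ?expr0 ?expr1 ?mul1r ?mulN1r; lra.
Qed.

Theorem lemma4p6 (R : realType) (N : nat) (k : int)
  (alpha beta p q eta xi : 'I_N -> R) :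
  (0 < N)%N ->
  (forall i : 'I_N, 0 < p i) ->
  (forall i : 'I_N, q i < 0) ->
  (forall i j : 'I_N, (i < j)%N -> p i < p j) ->
  (forall i j : 'I_N, (i < j)%N -> q j < q i) ->
  (forall i : 'I_N, 0 < alpha i) ->
  (forall i : 'I_N, Num.sg (beta i) = (-1) ^ (k + (i : nat)%:Z)) ->
  0 < \det (Fmat k alpha beta p q eta xi).
Proof.
move=> _ hp hq hpp hqq ha hb.
pose c (b : bool) (i j : 'I_N) := if b then
       alpha i * p i ^ (k + (j : nat)%:Z) * expR (eta i)
     else beta i * q i ^ (k + (j : nat)%:Z) * expR (xi i).
have -> : Fmat k alpha beta p q eta xi = \matrix_(i, j) \sum_(b : bool) c b i j.
  by apply/matrixP => i j; rewrite !mxE big_bool.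
have ec : forall f : 'I_N -> bool, \matrix_(i, j) c (f i) i j =
   \matrix_(i < N, j < N) (if f i then
       alpha i * p i ^ (k + (j : nat)%:Z) * expR (eta i)
     else beta i * q i ^ (k + (j : nat)%:Z) * expR (xi i)).
  by move=> f; apply/matrixP => i j; rewrite !mxE.
rewrite det_expand (bigD1 [ffun => true]) //=.
rewrite (ec (fun i => [ffun => true] i)).
have h1 := @term_pos R N k alpha beta p q eta xi (fun i => [ffun => true] i) hp hq hpp hqq ha hb.
apply: (lt_le_trans h1); rewrite lerDl.
apply: sumr_ge0 => f _; apply: ltW; rewrite (ec (fun i => f i)).
exact: (@term_pos R N k alpha beta p q eta xi (fun i => f i) hp hq hpp hqq ha hb).
Qed.
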